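(* Suppose every request of the input $\sigma$ is a triggering request with respect to ALG run on $\sigma$. Then for every request $r_k$ of $\sigma$, the position of $e_k$ in ALG's list remains unchanged throughout the time interval $[a_k,q_k)$ (and also at time $q_k$ before ALG acts at that time).
   Context: List Update with Time Windows. A set $\mathbb{E}$ of $n$ elements is kept in an ordered list (position $1$ is the head). An input $\sigma$ is a sequence of requests $r_1,\dots,r_m$; request $r_k$ specifies an element $e_k\in\mathbb{E}$, an arrival time $a_k$ and a deadline $q_k\ge a_k$. An algorithm may perform an access up to position $i$ at cost $i$, serving every pending request whose element currently lies in positions $1,\dots,i$, and may swap adjacent elements at cost $1$; actions are instantaneous; every request must be served within $[a_k,q_k]$. Algorithm ALG: whenever the current time equals the deadline of at least one pending request, let the triggering element be the element at the largest current position among those elements having a pending request whose deadline is the current time, and let $i$ be its position. ALG accesses the first $\min(2i-1,n)$ positions and then moves the triggering element to the front by $i-1$ adjacent swaps. At each such event the triggering request is one (arbitrarily fixed) pending request for the triggering element whose deadline is the current time. A request of $\sigma$ is a triggering request if it is the triggering request of some event of ALG on $\sigma$. *)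

(* Defs.v *)
From HB Require Import structures.
From mathcomp Require Export all_boot all_order.
Set Implicit Arguments.
Unset Strict Implicit.
Unset Printing Implicit Defensive.

(* A request: element, arrival time, deadline. Times live in an arbitrary
   totally ordered type T (e.g. the reals). Elements are 'I_n. *)
Record request (n : nat) (T : Type) :=
  Request { relem : 'I_n; rarr : T; rdl : T }.

(* State of ALG: current list (position 1 = head), indices of served
   requests, and the sequence of triggering requests (indices) so far. *)
Record state (n : nat) :=
  State { slist : seq 'I_n; sserved : seq nat; strig : seq nat }.

Definition pos (n : nat) (L : seq 'I_n) (x : 'I_n) : nat := (index x L).+1.

Section ALG.
Context {d : Order.disp_t} {T : orderType d} {n : nat}.
Variable sigma : seq (request n T).
(* The "arbitrarily fixed" choice of the triggering request among the
   pending requests of the triggering element with deadline = now;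
   arguments: current time, current list, candidate request indices. *)
Variable pick : T -> seq 'I_n -> seq nat -> nat.

Definition indexed : seq (nat * request n T) := zip (iota 0 (size sigma)) sigma.

Definition pending (st : state n) (t : T) (p : nat * request n T) : bool :=
  (p.1 \notin sserved st) && (rarr p.2 <= t)%O.

Definition event (t : T) (st : state n) : state n :=
  let L := slist st in
  let cands := [seq p <- indexed | pending st t p && (rdl p.2 == t)] in
  match cands with
  | [::] => st
  | p0 :: _ =>
    let i := foldr maxn 0 [seq pos L (relem p.2) | p <- cands] in
    let x := nth (relem p0.2) L i.-1 in
    let kt := pick t L [seq p.1 | p <- cands & relem p.2 == x] in
    (* access up to position min(2i-1, n): serve pending requests there *)
    let newly := [seq p.1 | p <- indexed &
                   pending st t p && (pos L (relem p.2) <= minn (i.*2).-1 n)] in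
    (* move x to the front (result of the i-1 adjacent swaps) *)
    State (x :: rem x L) (sserved st ++ newly) (strig st ++ [:: kt])
  end.

(* All events at time t (repeated while some pending request has deadline t;
   size sigma iterations always suffice since each event serves a request). *)
Definition step (t : T) (st : state n) : state n := iter (size sigma) (event t) st.

Definition event_times : seq T := sort <=%O (undup [seq rdl r | r <- sigma]).

Definition run (L0 : seq 'I_n) (P : pred T) : state n :=
  foldl (fun st u => step u st) (State L0 [::] [::]) [seq u <- event_times | P u].

Definition list_before (L0 : seq 'I_n) (t : T) : seq 'I_n :=
  slist (run L0 (fun u => (u < t)%O)).
Definition list_after (L0 : seq 'I_n) (t : T) : seq 'I_n :=
  slist (run L0 (fun u => (u <= t)%O)).

(* request number k (0-based index into sigma) is a triggering request *)
Definition triggering (L0 : seq 'I_n) (k : nat) : bool :=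
  k \in strig (run L0 predT).
End ALG.

(* Main.v *)
Require Import Defs.
From mathcomp Require Import all_boot all_order.
From mathcomp Require Import zify.
From HB Require Import structures.
Import Order.TTheory.
Open Scope order_scope.

Definition req_code {n : nat} {T : Type} (r : request n T) := (relem r, rarr r, rdl r).
Definition req_decode {n : nat} {T : Type} (c : 'I_n * T * T) := Request c.1.1 c.1.2 c.2.
Lemma req_codeK {n : nat} {T : Type} : cancel (@req_code n T) req_decode.
Proof. by case. Qed.
HB.instance Definition _ (d : Order.disp_t) (T : orderType d) (n : nat) :=
  Equality.copy (request n T) (can_type (@req_codeK n T)).

Section S.
Context {d : Order.disp_t} {T : orderType d} {n : nat}.
Variables (sigma : seq (request n T)) (pick : T -> seq 'I_n -> seq nat -> nat).
Hypothesis pickP : forall t L (s : seq nat), s != [::] -> pick t L s \in s.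
Variable x0 : request n T.

Lemma zip_iota (s : seq (request n T)) m (p : nat * request n T) :
  p \in zip (iota m (size s)) s -> (m <= p.1 < m + size s)%N /\ p.2 = nth x0 s (p.1 - m).
Proof.
elim: s m => [|y s IH] m //=.
rewrite in_cons => /orP [/eqP -> | /IH [h1 h2]] /=.
  by rewrite subnn; split => //; lia.
split; first lia.
rewrite h2; case E: (p.1 - m)%N => [|j] /=; first lia.
congr nth; lia.
Qed.

Lemma iota_zip (s : seq (request n T)) m j :
  (j < size s)%N -> (m + j, nth x0 s j) \in zip (iota m (size s)) s.
Proof.
elim: s m j => [|y s IH] m [|j] //= hj; rewrite in_cons.
  by rewrite addn0 eqxx.
by rewrite -addSnnS IH ?orbT.
Qed.

Lemma mem_indexed (p : nat * request n T) : p \in Defs.indexed sigma -> (p.1 < size sigma)%N /\ p.2 = nth x0 sigma p.1.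
Proof. by rewrite /Defs.indexed => /zip_iota; rewrite subn0. Qed.

Lemma indexed_mem j : (j < size sigma)%N -> (j, nth x0 sigma j) \in Defs.indexed sigma.
Proof. by rewrite /Defs.indexed => /(iota_zip _ 0). Qed.

Lemma maxn_in (s : seq nat) : s != [::] -> foldr maxn 0%N s \in s.
Proof.
elim: s => [|a s IH] //= _; rewrite in_cons.
case: s IH => [|b s] IH; first by rewrite /= maxn0 eqxx.
have := IH isT; rewrite -/(foldr maxn 0%N (b :: s)); set m := foldr _ _ (b :: s) => hm.
case: (leqP a m) => h.
  by rewrite hm orbT.
by rewrite eqxx.
Qed.

Lemma index_rem_cons (L : seq 'I_n) x e : x \in L -> e != x ->
  (index x L < index e L)%N -> index e (x :: rem x L) = index e L.
Proof.
elim: L => [|y L IH] //= xin ne.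
case: (eqVneq y x) => [-> | yx] /=.
  by [].
case: (eqVneq y e) => [<- | ye] //=.
rewrite ltnS => h.
rewrite in_cons eq_sym (negbTE yx) /= in xin.
have := IH xin ne h => /=.
by rewrite eq_sym (negbTE ne) => <-.
Qed.

Definition Inv (st : state n) :=
  perm_eq (slist st) (enum 'I_n) /\ {subset strig st <= sserved st}.

Definition Good (Q : pred T) (st st' : state n) :=
 [/\ Inv st',
     {subset sserved st <= sserved st'},
     exists tl, strig st' = strig st ++ tl /\
        forall j, j \in tl -> j \notin sserved st /\ Q (rdl (nth x0 sigma j)),
     (forall j, j \in sserved st' -> j \notin sserved st ->
        (j < size sigma)%N /\ exists2 u, Q u & rarr (nth x0 sigma j) <= u) &
     (forall k, (k < size sigma)%N -> k \notin sserved st' ->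
        (forall u, Q u -> rarr (nth x0 sigma k) <= u) ->
        pos (slist st') (relem (nth x0 sigma k)) = pos (slist st) (relem (nth x0 sigma k)))].

Lemma Good_refl (Q : pred T) st : Inv st -> Good Q st st.
Proof.
move=> I; split => //.
- by exists [::]; rewrite cats0.
- by move=> j ->.
Qed.

Lemma Good_trans (Q : pred T) st1 st2 st3 : Good Q st1 st2 -> Good Q st2 st3 -> Good Q st1 st3.
Proof.
move=> [_ s12 [tl1 [e1 h1]] n12 p12] [I3 s23 [tl2 [e2 h2]] n23 p23]; split => //.
- by move=> j /s12 /s23.
- exists (tl1 ++ tl2); rewrite e2 e1 catA; split => // j; rewrite mem_cat => /orP [/h1 //|/h2 [nj ->]].
  by split => //; apply/negP => /s12; apply/negP.
- move=> j j3 j1; case: (boolP (j \in sserved st2)) => j2; first exact: n12.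
  exact: n23.
- move=> k ks k3 hk; rewrite p23 //; apply: p12 => //.
  by apply/negP => /s23; apply/negP.
Qed.

Lemma Good_event (Q : pred T) t st : Q t -> Inv st -> Good Q st (event sigma pick t st).
Proof.
move=> Qt [Lp Ts]; rewrite /event; cbv zeta.
case Ec: [seq p <- Defs.indexed sigma | _] => [|p0 cs]; first exact: Good_refl.
have candP : forall p, p \in p0 :: cs -> [/\ p \in Defs.indexed sigma,
    p.1 \notin sserved st, rarr p.2 <= t & rdl p.2 = t].
  move=> p; rewrite -Ec mem_filter /pending => /andP [/andP [/andP [h1 h2] /eqP h3] h4].
  by split.
set L := slist st.
have memL : forall y, y \in L by move=> y; rewrite (perm_mem Lp) mem_enum.
have sizeL : size L = n by rewrite (perm_size Lp) size_enum_ord.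
set i := foldr maxn 0%N _.
have : i \in [seq pos L (relem p.2) | p <- p0 :: cs] by apply: maxn_in.
case/mapP => pm pmc pmi.
have i1 : (1 <= i)%N by rewrite pmi.
have iN : (i <= n)%N.
  have : (index (relem pm.2) L < size L)%N by rewrite index_mem.
  by rewrite pmi /pos sizeL.
set x := nth _ L i.-1.
have xE : x = relem pm.2 by rewrite /x pmi /pos /= nth_index.
set kt := pick _ _ _.
have : kt \in [seq p.1 | p <- p0 :: cs & relem p.2 == x].
  apply: pickP; apply/negP => /eqP E.
  have : pm.1 \in [seq p.1 | p <- p0 :: cs & relem p.2 == x].
    by apply: (map_f (fun p : nat * request n T => p.1)); rewrite mem_filter -xE eqxx pmc.
  by rewrite E.
case/mapP => pk; rewrite mem_filter => /andP [/eqP pkx pkc] ktE.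
case: (candP _ pkc) => pki pks pka pkd.
set newly := [seq p.1 | p <- _ & _].
have ktn : kt \in newly.
  rewrite ktE; apply: map_f; rewrite mem_filter pki /pending pks pka /= pkx xE -pmi.
  rewrite leq_min iN andbT; lia.
split.
- split => /=.
    by apply: perm_trans Lp; rewrite perm_sym perm_to_rem.
  move=> j; rewrite !mem_cat => /orP [/Ts -> //|]; rewrite mem_seq1 => /eqP ->.
  by rewrite ktn orbT.
- by move=> j /= jin; rewrite mem_cat jin.
- exists [:: kt]; split => // j; rewrite mem_seq1 => /eqP ->; rewrite ktE.
  by case: (mem_indexed _ pki) => _ <-; rewrite pkd.
- move=> j /=; rewrite mem_cat => /orP [-> //|] /mapP [p]; rewrite mem_filter.
  move=> /andP [/andP [/andP [_ pa] _] pi] -> _.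
  case: (mem_indexed _ pi) => ps <-; split => //; by exists t.
- move=> k ks /=; rewrite mem_cat negb_or => /andP [kns knn] hk.
  have ki := indexed_mem _ ks.
  set e := relem (nth x0 sigma k).
  have : ~~ (pos L e <= minn (i.*2).-1 n)%N.
    apply: contra knn => h; apply/mapP; exists (k, nth x0 sigma k) => //.
    by rewrite mem_filter ki /pending /= kns (hk t Qt) h.
  have eN : (pos L e <= n)%N.
    have : (index e L < size L)%N by rewrite index_mem.
    by rewrite /pos sizeL.
  move=> hh.
  have hlt : (pos L x < pos L e)%N.
    have -> : pos L x = i by rewrite xE -pmi.
    move: hh; lia.
  rewrite /pos index_rem_cons //.
  by apply/eqP => exx; move: hlt; rewrite exx ltnn.
Qed.

Lemma Good_iter (Q : pred T) t m st : Q t -> Inv st -> Good Q st (iter m (event sigma pick t) st).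
Proof.
move=> Qt I; elim: m => [|m IH]; first exact: Good_refl.
rewrite iterS.
apply: (Good_trans _ _ _ _ IH); apply: Good_event => //; by case: (IH).
Qed.

Lemma Good_fold (Q : pred T) ts st : all Q ts -> Inv st ->
  Good Q st (foldl (fun st u => step sigma pick u st) st ts).
Proof.
elim: ts st => [|u ts IH] st /=; first by move=> _; apply: Good_refl.
move=> /andP [Qu Qts] I.
have G1 : Good Q st (step sigma pick u st) by apply: Good_iter.
apply: (Good_trans _ _ _ _ G1); apply: IH => //; by case: (G1).
Qed.

Lemma filter_split (s : seq T) (D : pred T) : sorted <=%O s ->
  (forall x y, x <= y -> D y -> D x) -> filter D s ++ filter (predC D) s = s.
Proof.
move=> ss Dd; elim: s ss => [|y s IH] //= ps.
have ss := path_sorted ps.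
have ay := order_path_min le_trans ps.
case: (boolP (D y)) => Dy /=; first by rewrite IH.
have -> : filter D s = [::].
  apply/eqP; rewrite -[_ == _]negbK -has_filter; apply/hasPn => z zs.
  by apply: contra Dy; apply: Dd; move/allP: ay; apply.
rewrite cat0s; congr cons; apply/all_filterP; apply/allP => z zs /=.
by apply: contra Dy; apply: Dd; move/allP: ay; apply.
Qed.

Lemma key (L0 : seq 'I_n) k (P : pred T) :
  (k < size sigma)%N -> perm_eq L0 (enum 'I_n) -> triggering sigma pick L0 k ->
  (forall x y, x <= y -> P y -> P x) ->
  (forall u, u < rarr (nth x0 sigma k) -> P u) ->
  (forall u, P u -> rarr (nth x0 sigma k) <= u -> u < rdl (nth x0 sigma k)) ->
  pos (slist (run sigma pick L0 P)) (relem (nth x0 sigma k)) =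
  pos (list_before sigma pick L0 (rarr (nth x0 sigma k))) (relem (nth x0 sigma k)).
Proof.
move=> ks Lp trig Pd Pa Pq.
set r := nth x0 sigma k; set a := rarr r; set q := rdl r.
set E := event_times sigma.
have sE : sorted <=%O E by apply: sort_sorted; exact: le_total.
set f := fun st u => step sigma pick u st.
set s0 := State L0 [::] [::].
have I0 : Inv s0 by split.
set sa := foldl f s0 [seq u <- E | u < a].
have Ga : Good (fun u => u < a) s0 sa by apply: Good_fold => //; apply/allP => u; rewrite mem_filter => /andP [].
have kna : k \notin sserved sa.
  apply/negP => ksa; case: Ga => _ _ _ /(_ k ksa isT) [_ [u ua au]] _.
  by move: (lt_le_trans ua au); rewrite ltxx.
have runP : run sigma pick L0 P = foldl f sa [seq u <- [seq u <- E | P u] | ~~ (u < a)].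
  rewrite /run -/E -/f -/s0.
  have sP : sorted <=%O [seq u <- E | P u] by apply: sorted_filter => //; exact: le_trans.
  rewrite -{1}(filter_split _ (fun u => u < a) sP); last first.
    by move=> x y xy ya; apply: le_lt_trans xy ya.
  rewrite foldl_cat -filter_predI; congr foldl; rewrite /sa; congr foldl.
  by apply: eq_filter => u /=; case: (boolP (u < a)) => // /Pa ->.
set sP := foldl f sa _ in runP.
have GP : Good (fun u => (a <= u) && (u < q)) sa sP.
  apply: Good_fold; last by case: Ga.
  apply/allP => u; rewrite !mem_filter -leNgt => /andP [au /andP [Pu _]].
  by rewrite au Pq.
have finE : run sigma pick L0 predT = foldl f sP [seq u <- E | ~~ P u].
  rewrite -runP /run -/E -/f -/s0 -foldl_cat filter_predT.
  by rewrite (filter_split _ P).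
have Gf : Good predT sP (foldl f sP [seq u <- E | ~~ P u]).
  by apply: Good_fold; [apply/allP | case: GP].
rewrite /list_before runP.
case: (boolP (k \in sserved sP)) => ksP; last first.
  case: GP => _ _ _ _ -> //; by move=> u /andP [].
exfalso; move: trig; rewrite /triggering finE.
case: Gf => _ _ [tl2 [-> h2]] _ _.
case: GP => _ _ [tl1 [-> h1]] _ _.
case: Ga => [[_ Ts] _ _ _ _].
rewrite !mem_cat; apply/negP; rewrite !negb_or -andbA; apply/and3P; split.
- by apply: contra kna; apply: Ts.
- by apply/negP => /h1 [_ /andP [_]]; rewrite -/r -/q ltxx.
- by apply/negP => /h2 [+ _]; rewrite ksP.
Qed.
End S.

Close Scope order_scope.

Theorem mainTheorem4 (d : Order.disp_t) (T : orderType d) (n : nat)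
    (sigma : seq (request n T)) (L0 : seq 'I_n)
    (pick : T -> seq 'I_n -> seq nat -> nat) :
  perm_eq L0 (enum 'I_n) ->
  all (fun r => (rarr r <= rdl r)%O) sigma ->
  (forall t L (s : seq nat), s != [::] -> pick t L s \in s) ->
  (forall k, k < size sigma -> triggering sigma pick L0 k) ->
  forall k : 'I_(size sigma),
    let r := tnth (in_tuple sigma) k in
    forall t : T, (rarr r <= t)%O -> (t <= rdl r)%O ->
      pos (list_before sigma pick L0 t) (relem r)
        = pos (list_before sigma pick L0 (rarr r)) (relem r) /\
      ((t < rdl r)%O ->
       pos (list_after sigma pick L0 t) (relem r)
         = pos (list_before sigma pick L0 (rarr r)) (relem r)).
Proof.
move=> Lp _ pickP trig k /=.
have x0 : request n T := tnth (in_tuple sigma) k.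
rewrite (tnth_nth x0) /= => t hlo hhi.
have ks := ltn_ord k.
split.
- apply: (key sigma pick pickP x0 L0 k (fun u => (u < t)%O)) => //.
  + exact: trig.
  + by move=> x y xy yt; apply: le_lt_trans xy yt.
  + by move=> u ua; apply: lt_le_trans ua hlo.
  + by move=> u ut _; apply: lt_le_trans ut hhi.
- move=> htq.
  apply: (key sigma pick pickP x0 L0 k (fun u => (u <= t)%O)) => //.
  + exact: trig.
  + by move=> x y xy yt; apply: le_trans xy yt.
  + by move=> u ua; apply: ltW; apply: lt_le_trans ua hlo.
  + by move=> u ut _; apply: le_lt_trans ut htq.
Qed.
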